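(* Let $C$ be a finite set of coupons with $\delta=|C|$, and let $(p_o)_{o\in C}$ be a probability distribution on $C$. Draw $m\ge 3$ coupons independently, each draw yielding coupon $o$ with probability $p_o$, and let $V$ be the set of distinct coupons obtained. Then \[E(|V|) \leq \min\left\{\frac{m}{\log_2(m)}\cdot H_C+3,\ m,\ \delta\right\},\] where $H_C=\sum_{o\in C} p_o \log_2 \frac{1}{p_o}$ is the entropy of the coupon distribution.
   Context: $E(|V|)$ denotes the expected cardinality of the random set $V$. In the entropy sum, terms with $p_o=0$ are taken to be $0$. *)

(* Defs.v *)
From HB Require Import structures.
From mathcomp Require Import all_boot all_order all_algebra.
From mathcomp Require Import reals exp.
Set Implicit Arguments. Unset Strict Implicit. Unset Printing Implicit Defensive.
Import Order.TTheory GRing.Theory Num.Theory.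
Local Open Scope ring_scope.

Definition log2 (R : realType) (x : R) : R := ln x / ln 2.

Definition expected_distinct (R : realType) (C : finType) (p : C -> R) (m : nat) : R :=
  \sum_(s : m.-tuple C) (\prod_(i < m) p (tnth s i)) * #|[set x in s]|%:R.

Definition entropy (R : realType) (C : finType) (p : C -> R) : R :=
  \sum_(o : C) (if p o == 0 then 0 else p o * log2 (p o)^-1).

(* Main.v *)
Require Import Defs.
From HB Require Import structures.
From mathcomp Require Import all_boot all_order all_algebra.
From mathcomp Require Import reals exp.
From mathcomp Require Import ring lra.
Import Order.TTheory GRing.Theory Num.Theory.
Local Open Scope ring_scope.

Lemma ln2_ge (R : realType) : 1 / 2 <= ln (2 : R).
Proof.
have h := @le_ln1Dx R (- (1/2)).
have e : 1 + - (1/2) = (2 : R)^-1 by field.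
rewrite e lnV ?posrE // in h; last by lra.
Qed.

Lemma key (R : realType) (m : nat) (p t : R) : (3 <= m)%N -> 0 <= p <= 1 ->
  0 <= t <= 1 -> t <= m%:R * p ->
  t <= (if 1/4 < p then 1 else 0) +
       m%:R / log2 (m%:R : R) * (if p == 0 then 0 else p * log2 p^-1).
Proof.
move=> m3 /andP[p0 p1] /andP[t0 t1] tm.
have m3R : (3 : R) <= m%:R by rewrite (ler_nat R 3 m).
have lnm : 0 < ln (m%:R : R) by apply: ln_gt0; lra.
have ln2 := @ln2_ge R.
have eq : forall q : R, m%:R / log2 (m%:R : R) * (q * log2 q^-1) =
          m%:R * q * ln q^-1 / ln (m%:R : R).
  by move=> q; rewrite /log2; field; apply/andP; split; apply/lt0r_neq0; lra.
have ind0 : 0 <= (if 1/4 < p then 1 else 0 : R) by case: ifP => _; lra.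
case: eqP => [pz|/eqP pnz].
  by rewrite pz mulr0 in tm; rewrite mulr0 addr0; apply: le_trans tm ind0.
have pp : 0 < p by rewrite lt_def pnz p0.
rewrite eq.
have lnpi : 0 <= ln p^-1 by apply: ln_ge0; rewrite invf_ge1 //; lra.
have A0 : 0 <= m%:R * p * ln p^-1 / ln (m%:R : R).
  by apply: divr_ge0; [apply: mulr_ge0 => //; apply: mulr_ge0; lra | lra].
case: ifP => [_|/negbT]; first by lra.
rewrite -leNgt => p4.
rewrite add0r ler_pdivlMr //.
case: (lerP (m%:R * p) 1) => mp.
-
  have : ln (m%:R : R) <= ln p^-1.
    rewrite ler_ln ?posrE ?invr_gt0 //; last lra.
    by rewrite -(div1r p) ler_pdivlMr //; lra.
  move=> h; apply: (le_trans (y := m%:R * p * ln (m%:R : R))).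
    by apply: ler_wpM2r; lra.
  by apply: ler_wpM2l => //; apply: mulr_ge0; lra.
- (* ln m <= m p ln(1/p) *)
  have L1 : 1 <= ln p^-1.
    have : ln 4 <= ln (p^-1 : R).
      rewrite ler_ln ?posrE ?invr_gt0 //.
      by rewrite -(div1r p) ler_pdivlMr //; lra.
    have -> : (4 : R) = 2 * 2 by lra.
    rewrite lnM ?posrE //; lra.
  have h := @le_ln1Dx R (m%:R * p - 1).
  rewrite (_ : 1 + (m%:R * p - 1) = m%:R * p) in h; last by ring.
  rewrite lnM ?posrE // in h; last lra.
  rewrite lnV ?posrE // in L1 *.
  nra.
Qed.

Lemma sum_prod (R : realType) (C : finType) (m : nat) (q : 'I_m -> C -> R) :
  \sum_(s : m.-tuple C) \prod_(i < m) q i (tnth s i) = \prod_(i < m) \sum_c q i c.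
Proof.
rewrite bigA_distr_bigA /=.
rewrite (reindex (fun f : {ffun 'I_m -> C} => [tuple f i | i < m])) /=.
  by apply: eq_bigr => f _; apply: eq_bigr => i _; rewrite tnth_mktuple.
exists (fun s : m.-tuple C => [ffun i => tnth s i]) => [f _ | s _].
  by apply/ffunP => i; rewrite ffunE tnth_mktuple.
by apply: eq_from_tnth => i; rewrite tnth_mktuple ffunE.
Qed.

Lemma total (R : realType) (C : finType) (p : C -> R) (m : nat) :
  \sum_(o : C) p o = 1 ->
  \sum_(s : m.-tuple C) \prod_(i < m) p (tnth s i) = 1.
Proof.
move=> h; rewrite (@sum_prod R C m (fun _ c => p c)).
by rewrite (eq_bigr (fun _ => 1)) ?prodr_const ?expr1n // => i _.
Qed.

Lemma marginal (R : realType) (C : finType) (p : C -> R) (m : nat) (i : 'I_m) o :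
  \sum_(o : C) p o = 1 ->
  \sum_(s : m.-tuple C) (\prod_(j < m) p (tnth s j)) * (tnth s i == o)%:R = p o.
Proof.
move=> h.
pose q j c := if j == i then p c * (c == o)%:R else p c.
transitivity (\sum_(s : m.-tuple C) \prod_(j < m) q j (tnth s j)).
  apply: eq_bigr => s _.
  rewrite (bigD1 i) //= [in RHS](bigD1 i) //= /q eqxx mulrAC.
  congr (_ * _); apply: eq_bigr => j /negbTE ->; done.
rewrite sum_prod (bigD1 i) //= [X in _ * X]big1 ?mulr1; last first.
  by move=> j /negbTE ji; rewrite /q ji h.
rewrite /q eqxx (bigD1 o) //= eqxx mulr1 big1 ?addr0 // => c /negbTE ->.
by rewrite mulr0.
Qed.

Lemma card_setE (C : finType) (R : realType) (s : seq C) :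
  (#|[set x in s]|%:R : R) = \sum_(o : C) ((o \in s)%:R).
Proof.
rewrite -sum1_card natr_sum big_mkcond /=; apply: eq_bigr => o _.
by rewrite inE; case: (o \in s).
Qed.

Lemma bound_by (R : realType) (C : finType) (p : C -> R) (m k : nat) :
  (forall o, 0 <= p o) -> \sum_(o : C) p o = 1 ->
  (forall s : m.-tuple C, #|[set x in s]| <= k)%N -> expected_distinct p m <= k%:R.
Proof.
move=> p0 h hk; rewrite /expected_distinct.
apply: (le_trans (y := \sum_(s : m.-tuple C) (\prod_(i < m) p (tnth s i)) * k%:R)); last first.
  by rewrite -mulr_suml (@total R C p m h) mul1r.
apply: ler_sum => s _.
apply: ler_wpM2l; first by apply: prodr_ge0 => i _.
by rewrite ler_nat.
Qed.

Theorem lemma1 (R : realType) (C : finType) (p : C -> R) (m : nat) :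
  (forall o, 0 <= p o) -> \sum_(o : C) p o = 1 -> (3 <= m)%N ->
  expected_distinct p m <=
    Num.min (m%:R / log2 (m%:R : R) * entropy p + 3) (Num.min (m%:R : R) (#|C|%:R)).
Proof.
move=> p0 h m3.
have p1 : forall o, p o <= 1.
  move=> o; rewrite -h (bigD1 o) //= lerDl; exact: sumr_ge0.
rewrite !le_min; apply/and3P; split; last 2 first.
- apply: bound_by => // s; rewrite cardsE.
  by apply: leq_trans (card_size _) _; rewrite size_tuple.
- by apply: bound_by => // s; apply: max_card.
pose P (s : m.-tuple C) := \prod_(i < m) p (tnth s i).
have P0 : forall s, 0 <= P s by move=> s; apply: prodr_ge0.
pose T o := \sum_(s : m.-tuple C) P s * (o \in s)%:R.
have E : expected_distinct p m = \sum_o T o.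
  rewrite /expected_distinct /T exchange_big /=; apply: eq_bigr => s _.
  by rewrite card_setE mulr_sumr.
have T0 : forall o, 0 <= T o.
  by move=> o; apply: sumr_ge0 => s _; apply: mulr_ge0 => //; rewrite ler0n.
have T1 : forall o, T o <= 1.
  move=> o; rewrite -(@total R C p m h); apply: ler_sum => s _.
  rewrite -[X in _ <= X]mulr1; apply: ler_wpM2l => //.
  by case: (o \in s).
have Tm : forall o, T o <= m%:R * p o.
  move=> o.
  apply: (le_trans (y := \sum_(s : m.-tuple C) P s * \sum_(i < m) (tnth s i == o)%:R)).
    apply: ler_sum => s _; apply: ler_wpM2l => //.
    case: (boolP (o \in s)) => [/tnthP [i oi]|_]; last by apply: sumr_ge0 => i _; rewrite ler0n.
    rewrite (bigD1 i) //= oi eqxx lerDl; apply: sumr_ge0 => j _; rewrite ler0n //.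
  under eq_bigr do rewrite mulr_sumr.
  rewrite exchange_big /=.
  under eq_bigr do rewrite marginal //.
  by rewrite sumr_const card_ord mulr_natl.
pose ind o := (if 1/4 < p o then 1 else 0 : R).
have hT : forall o, T o <= ind o +
    m%:R / log2 (m%:R : R) * (if p o == 0 then 0 else p o * log2 (p o)^-1).
  move=> o; apply: key => //; first by rewrite p0 p1.
  by rewrite T0 T1.
rewrite E; apply: le_trans; first by apply: ler_sum => o _; apply: hT.
rewrite big_split /= -mulr_sumr /entropy addrC lerD2l.
rewrite /ind -big_mkcond /= sumr_const.
set n := #|_|.
have [n0|npos] := posnP n; first by rewrite n0 /=; lra.
have hs : (n%:R / 4 : R) < 1.
  apply: (lt_le_trans (y := \sum_(o | 1/4 < p o) p o)).
    have -> : n%:R / 4 = (1/4 : R) *+ n by rewrite -mulr_natl; field.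
    rewrite /n -sumr_const.
    apply: ltr_sum.
      case/card_gt0P: npos => x xin; apply/hasP; exists x => //.
    by move=> o.
  rewrite -h [X in _ <= X]big_mkcond /= big_mkcond /=.
  apply: ler_sum => o _; case: ifP => //.
have : (n%:R : R) < 4%:R by lra.
rewrite ltr_nat => n4.
have : (n <= 3)%N by [].
by rewrite -(ler_nat R) => /le_trans; apply.
Qed.
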